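(* Let $\Sigma=(X,U,F)$ be a system, $Q\subset X$ a controlled invariant set, and $V\subset U$ a finite cover of $Q$. Then $h_{inv}(Q)\le\log\rho(M_{Q,V})$, where $\rho$ denotes the spectral radius.
   Context: A system is a triple $\Sigma=(X,U,F)$ where $X,U$ are nonempty sets and $F:X\times U\rightrightarrows X$ is a set-valued map with $F(x,u)\neq\emptyset$ for all $(x,u)$; for $A\subset X$, $F(A,u)=\bigcup_{x\in A}F(x,u)$. $Q\subset X$ is controlled invariant if for every $x\in Q$ there is $u\in U$ with $F(x,u)\subset Q$. For $u\in U$ put $Q_u=\{x\in Q:F(x,u)\subset Q\}$. Elements of $U^n$ are written $\omega=\omega_0\cdots\omega_{n-1}$, $\omega_{[0,i]}=\omega_0\cdots\omega_i$. A set $S\subset U^n$ is an admissible family of length $n$ for $Q$ if (a) $\omega'_0=\omega''_0$ for all $\omega',\omega''\in S$, and (b) there exists $x\in Q$ such that for every $\omega\in S$, with $I^0_\omega(x)=\{x\}$: for all $i=0,\dots,n-2$, $F(I^i_\omega(x),\omega_i)\subset\bigcup_{\omega'\in S,\ \omega'_{[0,i]}=\omega_{[0,i]}}Q_{\omega'_{i+1}}$ and $I^{i+1}_\omega(x):=F(I^i_\omega(x),\omega_i)\cap Q_{\omega_{i+1}}\neq\emptyset$; and $I^n_\omega(x):=F(I^{n-1}_\omega(x),\omega_{n-1})\subset Q$. Let $AF^n(Q)$ be the set of such families and $Q_S$ the set of $x\in Q$ satisfying (b). A set $\mathscr{S}\subset U^n$ is $(n,Q)$-spanning if $Q\subset\bigcup_{S\subset\mathscr{S},\,S\in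 AF^n(Q)}Q_S$; $r_{inv}(n,Q)$ is the infimum of $\sharp\mathscr{S}$ over such sets, and $h_{inv}(Q)=\limsup_{n\to\infty}\frac1n\log r_{inv}(n,Q)$ ($\log$ base $2$). A set $V\subset U$ is a cover of $Q$ if $Q\subset\bigcup_{a\in V}Q_a$. The admissible matrix $M_{Q,V}=(M_{ab})_{a,b\in V}$ has $M_{ab}=1$ if there exists $x\in Q_a$ with $F(x,a)\cap Q_b\neq\emptyset$, and $M_{ab}=0$ otherwise. *)

(* Defs.v *)
From HB Require Import structures.
From mathcomp Require Import all_boot all_order all_algebra.
From mathcomp Require Import all_classical all_reals all_analysis.
From mathcomp Require Import complex.

Set Implicit Arguments.
Unset Strict Implicit.
Unset Printing Implicit Defensive.

Import Order.TTheory GRing.Theory Num.Theory.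
Local Open Scope classical_set_scope.
Local Open Scope ring_scope.

Section InvarianceEntropy.
Variables (X U : Type) (F : X -> U -> set X).

Definition Fimg (A : set X) (u : U) : set X :=
  [set y | exists2 x, A x & F x u y].

Definition controlled_invariant (Q : set X) : Prop :=
  forall x, Q x -> exists u, F x u `<=` Q.

Definition Qu (Q : set X) (u : U) : set X :=
  [set x | Q x /\ F x u `<=` Q].

(* Words omega = omega_0 ... omega_{n-1} in U^n are sequences of size n;
   the letter omega_i is [onth omega i] (= Some omega_i for i < n). *)
Definition words (n : nat) : set (seq U) := [set w | size w = n].

Fixpoint Iset (Q : set X) (x : X) (w : seq U) (i : nat) : set X :=
  match i with
  | 0 => [set x]
  | i'.+1 => [set y | exists a b, onth w i' = Some a /\ onth w i = Some b /\
                       Fimg (Iset Q x w i') a y /\ Qu Q b y]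
  end.

Definition adm_point (n : nat) (Q : set X) (S : set (seq U)) (x : X) : Prop :=
  Q x /\
  forall w, S w ->
    (forall i, (i.+2 <= n)%N ->
       (forall a, onth w i = Some a ->
          Fimg (Iset Q x w i) a `<=`
          [set y | exists w' b, S w' /\ take i.+1 w' = take i.+1 w /\
                                onth w' i.+1 = Some b /\ Qu Q b y]) /\
       Iset Q x w i.+1 !=set0) /\
    (forall a, onth w n.-1 = Some a -> Fimg (Iset Q x w n.-1) a `<=` Q).

Definition QS (n : nat) (Q : set X) (S : set (seq U)) : set X :=
  [set x | adm_point n Q S x].

Definition admissible_family (n : nat) (Q : set X) (S : set (seq U)) : Prop :=
  (0 < n)%N /\ S `<=` words n /\ S !=set0 /\
  (forall w' w'', S w' -> S w'' -> onth w' 0 = onth w'' 0) /\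
  (exists x, adm_point n Q S x).

Definition spanning (n : nat) (Q : set X) (SS : set (seq U)) : Prop :=
  SS `<=` words n /\
  Q `<=` [set x | exists S, S `<=` SS /\ admissible_family n Q S /\ QS n Q S x].

(* V \subset U finite, given as an injective enumeration v : 'I_k -> U;
   V is a cover of Q *)
Definition is_cover (Q : set X) (k : nat) (v : 'I_k -> U) : Prop :=
  Q `<=` [set x | exists a : 'I_k, Qu Q (v a) x].

Section Reals.
Variable R : realType.

(* r_inv(n,Q) = inf of the cardinalities of finite (n,Q)-spanning sets
   (+oo if there is none) *)
Definition r_inv (n : nat) (Q : set X) : \bar R :=
  ereal_inf [set (m%:R)%:E | m in
    [set m : nat | exists w : 'I_m -> seq U,
                   injective w /\ spanning n Q (range w)]].

(* log base 2 on [0, +oo], with log 0 = -oo, log +oo = +oo *)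
Definition log2 (r : R) : \bar R :=
  if r == 0 then -oo%E else (ln r / ln 2)%:E.

Definition elog2 (e : \bar R) : \bar R :=
  match e with
  | r%:E => log2 r
  | +oo%E => +oo%E
  | -oo%E => -oo%E
  end.

Definition h_inv (Q : set X) : \bar R :=
  limn_esup (fun n => ((n%:R^-1)%:E * elog2 (r_inv n Q))%E).

Definition adm_matrix (Q : set X) (k : nat) (v : 'I_k -> U) : 'M[R[i]]_k :=
  \matrix_(a, b) (`[< exists2 x, Qu Q (v a) x & F x (v a) `&` Qu Q (v b) !=set0 >] : nat)%:R.

End Reals.
End InvarianceEntropy.

(* spectral radius: max of |lambda| over the (complex) eigenvalues; 0 for the
   empty (0 x 0) matrix *)
Definition spectral_radius (R : realType) (k : nat) (M : 'M[R[i]]_k) : R :=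
  sup ([set 0] `|` [set Normc.normc l | l in [set l : R[i] | eigenvalue M l]]).

(* Main.v *)
Require Import Defs.
From HB Require Import structures.
From mathcomp Require Import all_boot all_order all_algebra.
From mathcomp Require Import all_classical all_reals all_analysis.
From mathcomp Require Import complex.
From mathcomp Require Import ring lra.
Import Order.TTheory GRing.Theory Num.Theory.
Local Open Scope classical_set_scope.
Local Open Scope ring_scope.
Set Implicit Arguments.
Unset Strict Implicit.
Unset Printing Implicit Defensive.

Lemma onth_some (T : Type) (s : seq T) i x0 : (i < size s)%N -> onth s i = Some (nth x0 s i).
Proof. by elim: s i => [|y s IH] [|i] //= /IH. Qed.

Section Span.
Variables (X U : Type) (F : X -> U -> set X) (Q : set X) (k : nat) (v : 'I_k -> U).
Hypotheses (hF : forall x u, F x u !=set0) (hv : injective v) (hcov : is_cover F Q v).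

Lemma IsetS x w i : Iset F Q x w i.+1 = [set y | exists a b, onth w i = Some a /\ onth w i.+1 = Some b /\
                       Fimg F (Iset F Q x w i) a y /\ Qu F Q b y].
Proof. by []. Qed.

Lemma Iset_cat x (p s : seq U) i : (i < size p)%N -> Iset F Q x (p ++ s) i = Iset F Q x p i.
Proof.
elim: i => [//|i IH] lt.
by rewrite !IsetS !onth_cat lt (ltnW lt) IH ?(ltnW lt).
Qed.

Lemma Iset_Qu x w a0 : onth w 0 = Some a0 -> Qu F Q a0 x ->
  forall i a z, onth w i = Some a -> Iset F Q x w i z -> Qu F Q a z.
Proof.
move=> w0 hx [|i] a z.
  by rewrite w0 => -[<-] /= ->.
rewrite IsetS => ha [a' [b [_ [hb [_ hq]]]]].
by move: hb; rewrite ha => -[->].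
Qed.

Definition Rel a b : Prop :=
  exists2 x, Qu F Q (v a) x & F x (v a) `&` Qu F Q (v b) !=set0.
Definition rr : rel 'I_k := fun a b => `[< Rel a b >].

Fixpoint Lf (n : nat) (a : 'I_k) : seq (seq 'I_k) :=
  if n is n'.+1 then
    flatten [seq [seq a :: s | s <- Lf n' b] | b <- enum 'I_k & rr a b]
  else [:: [:: a]].

Lemma Lf_size n a s : s \in Lf n a -> size s = n.+1.
Proof.
elim: n a s => [|n IH] a s /=.
  by rewrite inE => /eqP ->.
move/flattenP => [ss /mapP [b _ ->] /mapP [s' hs' ->]] /=.
by rewrite (IH _ _ hs').
Qed.

Lemma Lf_in n a t : size t = n -> path rr a t -> a :: t \in Lf n a.
Proof.
elim: n a t => [|n IH] a [|b t] //=; first by rewrite inE.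
move=> [st] /andP [hab hp].
apply/flattenP; exists [seq a :: s | s <- Lf n b].
  by apply/mapP; exists b => //; rewrite mem_filter hab mem_enum.
by apply/map_f/IH.
Qed.

Definition Lall n := flatten [seq Lf n a | a <- enum 'I_k].
Definition Lu n := undup (Lall n).
Definition wordsW n (i : 'I_(size (Lu n.-1))) : seq U := map v (nth [::] (Lu n.-1) i).

Lemma wordsW_inj n : injective (@wordsW n).
Proof.
move=> i j /(inj_map hv) /eqP; rewrite nth_uniq ?undup_uniq //.
by move=> /eqP /val_inj.
Qed.

Lemma extend N x a0 : Qu F Q (v a0) x -> forall m p, (size p + m = N)%N ->
  (forall j, (j < (size p).+1)%N -> Iset F Q x (map v (a0 :: p)) j !=set0) ->
  exists t, size t = N /\ (exists s, t = p ++ s) /\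
    forall j, (j < N.+1)%N -> Iset F Q x (map v (a0 :: t)) j !=set0.
Proof.
move=> hx; elim=> [|m IH] p hs hne.
  by exists p; split; [rewrite -hs addn0 | split; [exists [::]; rewrite cats0 | rewrite -hs addn0]].
pose c0 := nth a0 (a0 :: p) (size p).
have hw : onth (map v (a0 :: p)) (size p) = Some (v c0).
  by rewrite (onth_some (v a0)) ?size_map // (nth_map a0).
have [z hz] := hne (size p) (ltnSn _).
have qz : Qu F Q (v c0) z by apply: (Iset_Qu (a0 := v a0) _ hx hw hz).
have [y fy] := hF z (v c0).
have qy : Q y by apply: qz.2.
have [c hc] := hcov qy.
have ecat : map v (a0 :: rcons p c) = map v (a0 :: p) ++ [:: v c].
  by rewrite -cats1 /= map_cat.
have := IH (rcons p c); rewrite size_rcons addSnnS => /(_ hs) [].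
  move=> j; rewrite ltnS leq_eqVlt => /orP [/eqP ->|hj].
    exists y; rewrite IsetS; exists (v c0), (v c); rewrite ecat !onth_cat size_map /= ltnSn ltnS ltnn subnn hw.
    split=> //; split=> //; split=> //.
    by exists z => //; rewrite (@Iset_cat x (map v (a0 :: p)) [:: v c] (size p)) ?size_map.
  by rewrite ecat Iset_cat ?size_map //; apply: hne.
move=> t [st [[s et] hall]]; exists t; split=> //; split=> //.
by exists (c :: s); rewrite et cat_rcons.
Qed.


Lemma wsplit a0 (t : seq 'I_k) i :
  map v (a0 :: t) = map v (a0 :: take i t) ++ map v (drop i t).
Proof. by rewrite -map_cat /= cat_take_drop. Qed.

Lemma spanW n : (0 < n)%N -> spanning F n Q (range (@wordsW n)).
Proof.
case: n => // N n0.
split.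
  move=> _ [i _ <-]; rewrite /words /= /wordsW size_map.
  have : nth [::] (Lu N) i \in Lall N by rewrite -mem_undup mem_nth.
  by move/flattenP => [ss /mapP [a _ ->] hs]; rewrite (Lf_size hs).
move=> x qx; have [a0 hx] := hcov qx.
pose S := [set w | exists t, w = map v (a0 :: t) /\ size t = N /\
            forall j, (j < N.+1)%N -> Iset F Q x w j !=set0].
have adm : adm_point F N.+1 Q S x.
  split; first exact: hx.1.
  move=> _ [t [-> [st hne]]]; split.
    move=> i hi; split; last by apply: hne.
    move=> a ha y [z hz fzy].
    have qz := @Iset_Qu x (map v (a0 :: t)) (v a0) erefl hx _ _ _ ha hz.
    have qy : Q y := qz.2 _ fzy.
    have [c hc] := hcov qy.
    have hi' : (i < size t)%N by rewrite st -ltnS.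
    have sz : size (map v (a0 :: take i t)) = i.+1 by rewrite size_map /= size_take hi'.
    have ecat : map v (a0 :: rcons (take i t) c) = map v (a0 :: take i t) ++ [:: v c].
      by rewrite -cats1 /= map_cat.
    have ha' : onth (map v (a0 :: take i t)) i = Some a.
      by move: ha; rewrite (wsplit _ _ i) onth_cat sz ltnSn.
    have [t' [st' [[s es] hall]]] : exists t', size t' = N /\ (exists s, t' = rcons (take i t) c ++ s) /\
       forall j, (j < N.+1)%N -> Iset F Q x (map v (a0 :: t')) j !=set0.
      apply: (@extend N x a0 hx (N - i.+1)%N (rcons (take i t) c)).
    - by rewrite size_rcons size_take hi' subnKC // -st.
    - move=> j; rewrite size_rcons size_take hi' ltnS leq_eqVlt => /orP [/eqP ->|hj].
        exists y; rewrite IsetS; exists a, (v c); rewrite ecat !onth_cat sz ltnSn ltnn subnn ha'.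
        split=> //; split=> //; split=> //.
        exists z => //; rewrite (@Iset_cat x (map v (a0 :: take i t)) [:: v c] i) ?sz //.
        by move: hz; rewrite (wsplit _ _ i) Iset_cat ?sz.
      rewrite ecat Iset_cat ?sz //.
      by have := hne j (leq_trans hj (ltnW hi)); rewrite (wsplit _ _ i) Iset_cat ?sz.
    exists (map v (a0 :: t')), (v c); split; first by rewrite /S; exists t'; split => //; split.
    have e' : map v (a0 :: t') = map v (a0 :: take i t) ++ (v c :: map v s).
      by rewrite es /= map_cat map_rcons -cats1 -catA.
    split; first by rewrite e' (wsplit a0 t i) !(take_size_cat _ sz).
    by rewrite e' onth_cat sz ltnn subnn.
  move=> a ha y [z hz fzy].
  exact: (@Iset_Qu x (map v (a0 :: t)) (v a0) erefl hx _ _ _ ha hz).2 _ fzy.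
exists S; split; last (split; last exact: adm).
  move=> _ [t [-> [st hne]]].
  have hp : path rr a0 t.
    apply/(pathP a0) => i hi; apply/asboolP.
    have := hne i.+1; rewrite ltnS -st => /(_ hi) [y].
    rewrite IsetS => -[a [b [ha [hb [[z hz fzy] qb]]]]].
    have ea : a = v (nth a0 (a0 :: t) i).
      have hi1 : (i < size (a0 :: t))%N by apply: ltnW.
      by move: ha; rewrite (onth_some (v a0)) ?size_map // (nth_map a0) // => -[].
    have eb : b = v (nth a0 t i).
      have : onth (map v t) i = Some b by exact: hb.
      by rewrite (onth_some (v a0)) ?size_map // (nth_map a0) // => -[].
    exists z; first by rewrite -ea; exact: (@Iset_Qu x (map v (a0 :: t)) (v a0) erefl hx _ _ _ ha hz).
    by exists y; split; [rewrite -ea | rewrite -eb].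
  have hin : a0 :: t \in Lu N.
    rewrite mem_undup; apply/flattenP; exists (Lf N a0); last exact: Lf_in.
    by apply/map_f; rewrite mem_enum.
  have hidx : (index (a0 :: t) (Lu N) < size (Lu N))%N by rewrite index_mem.
  by exists (Ordinal hidx) => //; rewrite /wordsW /= nth_index.
split; first exact: n0.
split; first by move=> _ [t [-> [st _]]]; rewrite /words /= size_map /= st.
split.
  have h0 : forall j, (j < (size ([::] : seq 'I_k)).+1)%N ->
      Iset F Q x (map v (a0 :: [::])) j !=set0 by move=> [|j] // _; exists x.
  have [t [st [_ hall]]] := @extend N x a0 hx N [::] (erefl _) h0.
  by exists (map v (a0 :: t)); exists t; split=> //; split.
split; first by move=> _ _ [t1 [-> _]] [t2 [-> _]].
by exists x.
Qed.

Lemma rinv_le (R : realType) n : (0 < n)%N ->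
  (r_inv F R n Q <= (size (Lu n.-1))%:R%:E)%E.
Proof.
move=> n0; apply: ereal_inf_lbound; exists (size (Lu n.-1)) => //.
by exists (@wordsW n); split; [exact: wordsW_inj | exact: spanW].
Qed.

Lemma rinv_ge0 (R : realType) n : (0 <= r_inv F R n Q)%E.
Proof. by apply: le_ereal_inf_tmp => _ [m _ <-]; rewrite lee_fin. Qed.

End Span.

Section Mx.
Variable R : realType.
Local Notation nc := (@Normc.normc R).

Lemma nc_ge0 (z : R[i]) : 0 <= nc z.
Proof. by case: z => a b; exact: sqrtr_ge0. Qed.

Lemma nc_D (x y : R[i]) : nc (x + y) <= nc x + nc y.
Proof. exact: (@le_normcD R x y). Qed.

Lemma nc_nat m : nc (m%:R : R[i]) = m%:R.
Proof. by have := @normcMn R 1 m; rewrite Normc.normc1. Qed.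

Definition phi k (B : 'M[R[i]]_k) : R[i] := \sum_i \sum_j B i j.

Lemma phiB k (A B : 'M[R[i]]_k) : phi (A - B) = phi A - phi B.
Proof.
rewrite /phi -sumrB; apply: eq_bigr => i _; rewrite -sumrB.
by apply: eq_bigr => j _; rewrite !mxE.
Qed.

Lemma phiZ k z (A : 'M[R[i]]_k) : phi (z *: A) = z * phi A.
Proof.
rewrite /phi mulr_sumr; apply: eq_bigr => i _; rewrite mulr_sumr.
by apply: eq_bigr => j _; rewrite !mxE.
Qed.

Lemma phi0 k : phi (0 : 'M[R[i]]_k) = 0.
Proof. by rewrite /phi big1 // => i _; rewrite big1 // => j _; rewrite mxE. Qed.

Lemma rec_bound k (M : 'M[R[i]]_k) (r : R) (s : seq R[i]) :
  (forall z, z \in s -> nc z < r) ->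
  forall B : 'M[R[i]]_k, B * \prod_(z <- s) (M - z%:M) = 0 ->
  exists D : R, forall n, nc (phi (B * M ^+ n)) <= D * r ^+ n.
Proof.
elim: s => [|z s IH] hs B hB.
  exists 0 => n; move: hB; rewrite big_nil mulr1 => ->.
  by rewrite mul0r phi0 Normc.normc0 mul0r.
move: hB; rewrite big_cons mulrA => hB.
have hs' : forall w, w \in s -> nc w < r by move=> w hw; apply: hs; rewrite inE hw orbT.
have [D' hD'] := IH hs' _ hB.
have hz : nc z < r by apply: hs; rewrite inE eqxx.
have D'0 : 0 <= D'.
  have := hD' 0%N; rewrite !expr0 !mulr1 => h; exact: le_trans (nc_ge0 _) h.
pose x n := phi (B * M ^+ n).
pose y n := phi (B * (M - z%:M) * M ^+ n).
have rec n : x n.+1 = y n + z * x n.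
  rewrite /x /y mulrBr mulrBl -mulrA -exprS.
  have -> : B * z%:M = z *: B by exact: mul_mx_scalar.
  by rewrite -[z *: B * _]scalemxAl phiB phiZ subrK.
have rz : 0 < r - nc z by rewrite subr_gt0.
exists (nc (x 0%N) + D' / (r - nc z)) => n.
have hD0 : 0 <= D' / (r - nc z) by rewrite divr_ge0 // ltW.
elim: n => [|n IHn].
  by rewrite [r ^+ 0]expr0 mulr1 lerDl.
rewrite -/(x n.+1) rec.
apply: (le_trans (nc_D _ _)); rewrite Normc.normcM.
have h1 := hD' n.
have h2 : nc z * nc (x n) <= nc z * ((nc (x 0%N) + D' / (r - nc z)) * r ^+ n).
  by rewrite ler_wpM2l // nc_ge0.
apply: (le_trans (lerD h1 h2)).
set E := nc (x 0%N) + D' / (r - nc z).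
have key : D' + nc z * E <= E * r.
  have -> : E * r = E * (r - nc z) + nc z * E by rewrite mulrBr [nc z * E]mulrC subrK.
  rewrite lerD2r /E mulrDl divfK ?gt_eqF // lerDr.
  by rewrite mulr_ge0 ?nc_ge0 // ltW.
rewrite exprS mulrA mulrA -mulrDl.
by rewrite ler_wpM2r // exprn_ge0 // ltW // (le_lt_trans (nc_ge0 z) hz).
Qed.


Definition eigset k (M : 'M[R[i]]_k) : set R :=
  [set 0] `|` [set nc l | l in [set l : R[i] | eigenvalue M l]].

Lemma eig_fin k (M : 'M[R[i]]_k) : exists rs : seq R[i], forall l, eigenvalue M l -> l \in rs.
Proof.
case: k M => [|k'] M.
  by exists [::] => l; rewrite /eigenvalue /eigenspace (flatmx0 (kermx _)) eqxx.
have [rs hrs] := closed_field_poly_normal (char_poly M).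
exists rs => l; rewrite eigenvalue_root_char hrs (monicP (char_poly_monic M)) scale1r.
by rewrite root_prod_XsubC.
Qed.

Lemma nc_le_sum (rs : seq R[i]) l : l \in rs -> nc l <= \sum_(z <- rs) nc z.
Proof.
elim: rs => [//|z rs IH]; rewrite inE big_cons => /orP [/eqP ->|hl].
  by rewrite lerDl sumr_ge0 // => w _; exact: nc_ge0.
by apply: (le_trans (IH hl)); rewrite lerDr nc_ge0.
Qed.

Lemma spec_ub k (M : 'M[R[i]]_k) :
  (forall z, eigenvalue M z -> nc z <= spectral_radius M) /\ 0 <= spectral_radius M.
Proof.
have [rs hrs] := eig_fin M.
have hub : has_ubound (eigset M).
  exists (\sum_(z <- rs) nc z) => _ [->|[l hl <-]].
    by rewrite sumr_ge0 // => w _; exact: nc_ge0.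
  exact: nc_le_sum (hrs _ hl).
have := ub_le_sup hub; rewrite /spectral_radius => h.
split; first by move=> z hz; apply: h; right; exists z.
by apply: h; left.
Qed.

Lemma spec_bound k (M : 'M[R[i]]_k) (r : R) : spectral_radius M < r ->
  exists D : R, forall n, nc (phi (M ^+ n)) <= D * r ^+ n.
Proof.
case: k M => [|k'] M hr.
  by exists 0 => n; rewrite /phi big_ord0 Normc.normc0 mul0r.
have [rs hrs] := closed_field_poly_normal (char_poly M).
rewrite (monicP (char_poly_monic M)) scale1r in hrs.
have hs : forall z, z \in rs -> nc z < r.
  move=> z hz; apply: le_lt_trans hr; apply: (spec_ub M).1.
  by rewrite eigenvalue_root_char hrs root_prod_XsubC.
have hB : (1 : 'M[R[i]]_k'.+1) * \prod_(z <- rs) (M - z%:M) = 0.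
  rewrite mul1r; have := Cayley_Hamilton M; rewrite hrs rmorph_prod => <-.
  by apply: eq_bigr => z _; rewrite rmorphB /= horner_mx_X horner_mx_C.
have [D hD] := rec_bound hs hB.
by exists D => n; have := hD n; rewrite mul1r.
Qed.

End Mx.

Lemma size_flatten_map (T S : Type) (f : T -> seq S) (s : seq T) :
  size (flatten (map f s)) = (\sum_(x <- s) size (f x))%N.
Proof. by elim: s => [|y s IH]; rewrite ?big_nil ?big_cons //= size_cat IH. Qed.

Section Count.
Variables (R : realType) (X U : Type) (F : X -> U -> set X) (Q : set X) (k : nat) (v : 'I_k -> U).

Lemma size_Lf N a : ((size (Lf F Q v N a))%:R : R[i]) = \sum_j ((adm_matrix F R Q v) ^+ N) a j.
Proof.
elim: N a => [|N IH] a.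
  rewrite expr0 /= (bigD1 a) //= mxE eqxx big1 ?addr0 // => j hj.
  by rewrite mxE eq_sym (negbTE hj).
rewrite /= size_flatten_map big_filter natr_sum.
under eq_bigr do rewrite size_map.
rewrite big_enum_cond /= exprS.
under [RHS]eq_bigr do rewrite mxE.
rewrite exchange_big /= big_mkcond /=; apply: eq_bigr => b _.
rewrite -mulr_sumr -IH mxE.
by rewrite /rr; case: (asboolP _) => _; rewrite ?mul1r ?mul0r.
Qed.

Lemma size_Lall N : ((size (Lall F Q v N))%:R : R[i]) = phi (adm_matrix F R Q v ^+ N).
Proof.
rewrite /Lall size_flatten_map natr_sum big_enum /phi.
by apply: eq_bigr => a _; rewrite size_Lf.
Qed.
End Count.

Lemma limn_esup_ev (R : realType) (u : (\bar R)^nat) (y : \bar R) N0 :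
  (forall n, (N0 <= n)%N -> (u n <= y)%E) -> (limn_esup u <= y)%E.
Proof.
move=> h; rewrite limn_esup_lim; apply: lime_le; first exact: is_cvg_esups.
exists N0 => // m /= hm.
by apply/ereal_supP => _ [n /= hn <-]; apply: h; exact: leq_trans hm hn.
Qed.

Unset Implicit Arguments.
Set Strict Implicit.

Theorem proposition3p8 (R : realType) (X U : Type) (F : X -> U -> set X)
  (hX : inhabited X) (hU : inhabited U)
  (hF : forall x u, F x u !=set0)
  (Q : set X) (hQ : controlled_invariant F Q)
  (k : nat) (v : 'I_k -> U) (hv : injective v) (hcov : is_cover F Q v) :
  (h_inv F R Q <= log2 (spectral_radius (adm_matrix F R Q v)))%E.
Proof.
set M := adm_matrix F R Q v; set rho := spectral_radius M.
have [_ rho0] := spec_ub M.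
have L2 : 0 < ln (2 : R) by apply: ln_gt0; rewrite ltr1n.
have key : forall t : R, rho < expR t -> forall e : R, 0 < e ->
    (h_inv F R Q <= (t / ln 2 + e)%:E)%E.
  move=> t ht e e0.
  have [D hD] := spec_bound ht.
  pose D1 := Num.max D 1.
  have D1ge : 1 <= D1 by rewrite le_max lexx orbT.
  have D1pos : 0 < D1 by apply: lt_le_trans D1ge.
  pose c := ln D1 - t.
  have eL : 0 < e * ln 2 by rewrite mulr_gt0.
  have cb0 : 0 <= `|c| / (e * ln 2) by rewrite divr_ge0 // ltW.
  pose N0 := (Num.Def.archi_bound (`|c| / (e * ln 2))).+1.
  rewrite /h_inv; apply: (@limn_esup_ev R _ _ N0) => n hn.
  have n1 : (0 < n)%N by apply: leq_trans hn.
  have hm := rinv_le hF hv hcov R n1.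
  have g0 := rinv_ge0 F Q R n.
  have hsz : ((size (Lu F Q v n.-1))%:R : R) <= D1 * expR t ^+ n.-1.
    apply: (@le_trans _ _ ((size (Lall F Q v n.-1))%:R)).
      by rewrite ler_nat size_undup.
    rewrite -nc_nat size_Lall; apply: (le_trans (hD _)).
    by rewrite ler_wpM2r // ?exprn_ge0 ?expR_ge0 // le_max lexx.
  have nn : 0 < (n%:R : R) by rewrite ltr0n.
  have hc : c < e * ln 2 * n%:R.
    apply: (le_lt_trans (ler_norm c)).
    rewrite -ltr_pdivrMl //.
    rewrite mulrC; apply: (lt_le_trans (archi_boundP cb0)).
    by rewrite ler_nat; apply: ltnW.
  move: hm g0; case: (r_inv F R n Q) => [x| |] //=.
    rewrite !lee_fin => hm g0.
    rewrite /log2; case: eqP => [_|hx0].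
      by rewrite mulrNy gtr0_sg ?invr_gt0 // mul1e leNye.
    have xpos : 0 < x by rewrite lt_neqAle eq_sym; apply/andP; split => //; apply/eqP.
    have lx : ln x <= ln D1 + t * (n.-1)%:R.
      have pp : 0 < expR t ^+ n.-1 by rewrite exprn_gt0 ?expR_gt0.
      have -> : ln D1 + t * (n.-1)%:R = ln (D1 * expR t ^+ n.-1).
        by rewrite lnM ?posrE // lnXn ?expR_gt0 // expRK mulr_natr.
      rewrite ler_ln ?posrE ?mulr_gt0 //.
      exact: le_trans hm hsz.
    have en : (n.-1%:R : R) = n%:R - 1 by rewrite -subn1 natrB.
    rewrite en in lx.
    rewrite -EFinM lee_fin.
    have -> : n%:R^-1 * (ln x / ln 2) = ln x / (n%:R * ln 2).
      by field; rewrite ?gt_eqF.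
    rewrite ler_pdivrMr ?mulr_gt0 //.
    have -> : (t / ln 2 + e) * (n%:R * ln 2) = t * n%:R + e * ln 2 * n%:R.
      by field; rewrite gt_eqF.
    rewrite /c in hc; lra.
case: (eqVneq rho 0) => [r0 | rn0].
  rewrite /log2 r0 eqxx.
  have hall : forall s : R, (h_inv F R Q <= s%:E)%E.
    move=> s; have := key ((s - 1) * ln 2) _ 1 ltr01.
    rewrite mulfK ?gt_eqF // subrK; apply.
    by rewrite r0 expR_gt0.
  case: (h_inv F R Q) hall => [x| |] hall //.
    have h := hall (x - 1); rewrite lee_fin in h.
    have : x - 1 < x by rewrite ltrBlDr ltrDl ltr01.
    by rewrite ltNge h.
  by have := hall 0.
have rp : 0 < rho by rewrite lt_neqAle eq_sym rn0 rho0.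
rewrite /log2 (negbTE rn0); apply/lee_addgt0Pr => e e0.
have e2 : 0 < e / 2 by rewrite divr_gt0.
have er : expR (ln rho) = rho by rewrite lnK // posrE.
have hlt : rho < expR (ln rho + e / 2 * ln 2).
  by rewrite -{1}er ltr_expR ltrDl mulr_gt0.
have := key _ hlt _ e2.
have -> : (ln rho + e / 2 * ln 2) / ln 2 + e / 2 = ln rho / ln 2 + e.
  by field; rewrite gt_eqF.
by rewrite EFinD.
Qed.
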